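(* Assume $n\ge2$ and $F_\infty\ne0$. Then $F$ has exactly $n-1$ zeros, located as follows. - Exactly $n-2$ of them lie strictly between consecutive singularities of $F$ (the zeros of $g$), one in each such open interval. - The remaining zero lies to the left of the smallest zero of $g$ if $F_\infty>0$, and to the right of the largest zero of $g$ if $F_\infty<0$.
   Context: Data: an integer $N\ge 2$, reals $x_A<x_B$, $R=x_B-x_A$, and bins $i=1,\dots,N$ with widths $\Delta x_i>0$ and centers $x_i$ that tile $[x_A,x_B]$ contiguously in increasing order, so that $x_1-x_A=\Delta x_1/2$, $x_N-x_A=R-\Delta x_N/2$ and $0<x_1-x_A<\dots<x_N-x_A<R$. The counts are $y_i\in\{0,1,2,\dots\}$, $M=\sum_i y_i$, and $n$ is the number of indices with $y_i\ge1$. Write $d_i=x_i-x_A$. Define $$g(a)=\sum_{i=1}^N y_i\frac{d_i}{1+a d_i}$$ for $a\notin\{-1/d_i: y_i\ge 1\}$; these excluded points are the poles of $g$. Define $$F(a)=1+\frac R2\Big(a-\frac{M}{g(a)}\Big)$$ wherever $g(a)$ is finite and nonzero. At poles of $g$, $F$ is extended by continuity as $F(a)=1+aR/2$. The zeros of $g$ are the singularities of $F$. Finally, $$F_\infty=1-\frac{R}{2M}\sum_i \frac{y_i}{d_i}.$$ *)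

(* Defs.v *)
From HB Require Import structures.
From mathcomp Require Import all_boot all_order all_algebra.
From mathcomp Require Import reals.
Set Implicit Arguments. Unset Strict Implicit. Unset Printing Implicit Defensive.
Import Order.TTheory GRing.Theory Num.Theory.
Local Open Scope ring_scope.

Section Defs.
Variables (R : realType) (N : nat).
(* d i = x_i - x_A, y i = counts *)
Variables (d : 'I_N -> R) (y : 'I_N -> nat).

Definition Mtot : R := (\sum_(i < N) y i)%N%:R.

Definition nOcc : nat := #|[pred i : 'I_N | 0 < y i]%N|.

Definition gfun (a : R) : R := \sum_(i < N) (y i)%:R * d i / (1 + a * d i).

Definition is_pole (a : R) : bool :=
  [exists i : 'I_N, (0 < y i)%N && (1 + a * d i == 0)].

Definition is_sing (a : R) : Prop := ~ is_pole a /\ gfun a = 0.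

(* F, extended by continuity at the poles of g as 1 + a R/2; Rg is the range R = x_B - x_A *)
Definition Ffun (Rg : R) (a : R) : R :=
  if is_pole a then 1 + a * Rg / 2
  else 1 + Rg / 2 * (a - Mtot / gfun a).

Definition is_zeroF (Rg : R) (a : R) : Prop := ~ is_sing a /\ Ffun Rg a = 0.

Definition Finf (Rg : R) : R := 1 - Rg / (2 * Mtot) * \sum_(i < N) (y i)%:R / d i.

End Defs.

(* Main.v *)
Require Import Defs.
From HB Require Import structures.
From mathcomp Require Import all_boot all_order all_algebra.
From mathcomp Require Import reals polyrcf.
From mathcomp Require Import zify ring lra.
Import Order.TTheory GRing.Theory Num.Theory.
Local Open Scope ring_scope.
Set Warnings "-notation-overridden -ambiguous-paths".

Ltac clear_junk := repeat match goal with H : ?T |- _ =>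
  lazymatch T with context [leq _ _] => fail | context [ltn _ _] => fail
  | @eq nat _ _ => fail | _ => clear H end end.
Ltac nlia := clear_junk; lia.

Lemma sum_ltn (n k : nat) : (\sum_(j < n) (k < j)%N)%N = (n - k.+1)%N.
Proof.
elim: n => [|n IH]; first by rewrite big_ord0.
rewrite big_ord_recr /= IH; case: ltnP => h /=; lia.
Qed.

Lemma neg_prod (R : numDomainType) (s u v : R) :
  s * s = 1 -> 0 < s * u -> 0 < - s * v -> u * v < 0.
Proof.
move=> ss h1 h2.
have e : (s * u) * (- s * v) = - (u * v) * (s * s) by ring.
rewrite ss mulr1 in e.
by rewrite -oppr_gt0 -e mulr_gt0.
Qed.

Lemma sign_sq (R : pzRingType) (m : nat) : (-1) ^+ m * (-1) ^+ m = 1 :> R.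
Proof. by rewrite -exprD addnn -mul2n exprM sqrrN expr1n expr1n. Qed.

Lemma signS (R : pzRingType) (m : nat) : (-1) ^+ m.+1 = - (-1) ^+ m :> R.
Proof. by rewrite exprS mulN1r. Qed.

Lemma incr_gen (R : numDomainType) (f : nat -> R) m :
  (forall k, (k.+1 < m)%N -> f k < f k.+1) ->
  forall i j, (i < j)%N -> (j < m)%N -> f i < f j.
Proof.
move=> h i; elim=> [//|j IH] ij jm.
have := h j jm.
case: (ltnP i j) => [lij|].
  by move=> hj; apply: lt_trans (IH lij (ltnW jm)) hj.
by move=> ji; have -> : i = j by lia.
Qed.

Section Abs.
Variable R : rcfType.
Variables (n : nat) (p w : nat -> R) (Rg : R).
Hypothesis n2 : (2 <= n)%N.
Hypothesis p_inc : forall i j, (i < j)%N -> (j < n)%N -> p i < p j.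
Hypothesis w_pos : forall k, (k < n)%N -> 0 < w k.
Hypothesis Rg_pos : 0 < Rg.

Definition AM := \sum_(k < n) w k.
Definition agg a := \sum_(k < n) w k / (a - p k).
Definition apole a := [exists k : 'I_n, a == p k].
Definition aPk k := \prod_(j < n | (j : nat) != k) ('X - (p j)%:P).
Definition aPP := \prod_(j < n) ('X - (p j)%:P).
Definition aQ := \sum_(k < n) w k *: aPk k.
Definition aH := \sum_(k < n) (w k * (2 / Rg + p k)) *: aPk k.

Lemma p_le i j : (i <= j)%N -> (j < n)%N -> p i <= p j.
Proof.
rewrite leq_eqVlt => /orP[/eqP -> //|ij jn].
by rewrite le_eqVlt p_inc ?orbT.
Qed.

Lemma p_ltE i j : (i < n)%N -> (j < n)%N -> (p i < p j) = (i < j)%N.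
Proof.
move=> hi hj; case: (ltnP i j) => h; first exact: p_inc.
by apply/negbTE; rewrite -leNgt; apply: p_le.
Qed.

Lemma p_inj i j : (i < n)%N -> (j < n)%N -> p i = p j -> i = j.
Proof.
move=> hi hj e; case: (ltngtP i j) => // h;
  [have := p_inc _ _ h hj | have := p_inc _ _ h hi]; by rewrite e ltxx.
Qed.

Lemma hornerPk k a : (aPk k).[a] = \prod_(j < n | (j:nat) != k) (a - p j).
Proof. by rewrite /aPk horner_prod; apply: eq_bigr => j _; rewrite hornerXsubC. Qed.

Lemma hornerPP a : aPP.[a] = \prod_(j < n) (a - p j).
Proof. by rewrite /aPP horner_prod; apply: eq_bigr => j _; rewrite hornerXsubC. Qed.

Lemma nopole a : ~~ apole a -> forall j, (j < n)%N -> a - p j != 0.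
Proof.
move=> np j hj; rewrite subr_eq0; apply: contraNN np => e.
by apply/existsP; exists (Ordinal hj).
Qed.

Lemma PP_split a k (hk : (k < n)%N) : aPP.[a] = (a - p k) * (aPk k).[a].
Proof.
by rewrite hornerPP hornerPk (bigD1 (Ordinal hk)) //=.
Qed.

Lemma PP_neq0 a : ~~ apole a -> aPP.[a] != 0.
Proof.
move=> np; rewrite hornerPP; apply/prodf_neq0 => j _; exact: nopole.
Qed.

Lemma hornerQ a : ~~ apole a -> aQ.[a] = agg a * aPP.[a].
Proof.
move=> np; rewrite /aQ /agg horner_sum mulr_suml; apply: eq_bigr => k _.
rewrite hornerZ (PP_split a _ (ltn_ord k)).
have := @nopole a np k (ltn_ord k) => h; field.
by rewrite h.
Qed.

Lemma hornerH a : ~~ apole a -> aH.[a] = ((2 / Rg + a) * agg a - AM) * aPP.[a].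
Proof.
move=> np; rewrite /aH /agg /AM horner_sum mulr_sumr -sumrB mulr_suml.
apply: eq_bigr => k _.
rewrite hornerZ (PP_split a _ (ltn_ord k)).
have := @nopole a np k (ltn_ord k) => h.
have hR : Rg != 0 by rewrite gt_eqF.
field; by rewrite h hR.
Qed.

Lemma Pk_at k j (hk : (k < n)%N) : j != k -> (aPk j).[p k] = 0.
Proof.
move=> jk; rewrite hornerPk (bigD1 (Ordinal hk)) /=; last by rewrite eq_sym.
by rewrite subrr mul0r.
Qed.

Lemma Pk_self k (hk : (k < n)%N) : (aPk k).[p k] != 0.
Proof.
rewrite hornerPk; apply/prodf_neq0 => j jk; rewrite subr_eq0.
apply/eqP => e; move: jk; rewrite (p_inj _ _ hk (ltn_ord j) e) eqxx //.
Qed.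

Lemma hornerQ_pole k (hk : (k < n)%N) : aQ.[p k] = w k * (aPk k).[p k].
Proof.
rewrite /aQ horner_sum (bigD1 (Ordinal hk)) //= hornerZ big1 ?addr0 //.
move=> j jk; rewrite hornerZ Pk_at ?mulr0 //.
Qed.

Lemma hornerH_pole k (hk : (k < n)%N) :
  aH.[p k] = w k * (2 / Rg + p k) * (aPk k).[p k].
Proof.
rewrite /aH horner_sum (bigD1 (Ordinal hk)) //= hornerZ big1 ?addr0 //.
move=> j jk; rewrite hornerZ Pk_at ?mulr0 //.
Qed.

Lemma sign_prod (P : pred 'I_n) x : (forall j : 'I_n, P j -> x != p j) ->
  0 < (-1) ^+ (\sum_(j < n | P j) nat_of_bool (x < p j)%R)%N * \prod_(j < n | P j) (x - p j).
Proof.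
move=> h; rewrite -prodrXr -big_split /=; apply: prodr_gt0 => j Pj.
have := h j Pj; case: (ltrP x (p j)) => hx hne /=.
  by rewrite expr1 mulN1r oppr_gt0 subr_lt0.
rewrite expr0 mul1r subr_gt0 lt_neqAle hx andbT eq_sym //.
Qed.

Lemma sgn_Pk k (hk : (k < n)%N) : 0 < (-1) ^+ (n - k.+1) * (aPk k).[p k].
Proof.
have := @sign_prod (fun j : 'I_n => (j : nat) != k) (p k).
have -> : (\sum_(j < n | (j:nat) != k) nat_of_bool (p k < p j)%R)%N = (n - k.+1)%N.
  rewrite -sum_ltn [RHS](bigD1 (Ordinal hk)) //= ltnn add0n.
  apply: eq_big => j; first by rewrite -val_eqE.
  by move=> jk; rewrite p_ltE.
rewrite hornerPk; apply => j jk; apply/eqP => e.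
by move: jk; rewrite (p_inj _ _ hk (ltn_ord j) e) eqxx.
Qed.

Lemma sgn_PP k x : (k.+1 < n)%N -> p k < x < p k.+1 ->
  0 < (-1) ^+ (n - k.+1) * aPP.[x].
Proof.
move=> hk /andP[h1 h2].
have := @sign_prod xpredT x.
have -> : (\sum_(j < n) nat_of_bool (x < p j)%R)%N = (n - k.+1)%N.
  rewrite -sum_ltn; apply: eq_bigr => j _.
  case: (ltnP k j) => kj.
    by rewrite (lt_le_trans h2) // p_le.
  by apply/eqP; rewrite eqb0 -leNgt (le_trans _ (ltW h1)) // p_le // ltnW.
rewrite hornerPP; apply => j _; apply/eqP => e.
case: (ltnP k j) => kj.
  by move: h2; rewrite e ltNge p_le.
by move: h1; rewrite e ltNge p_le // ltnW.
Qed.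


Lemma AM_pos : 0 < AM.
Proof.
have h0 : (0 < n)%N by nlia.
rewrite /AM (bigD1 (Ordinal h0)) //= ltr_pwDl ?w_pos //.
by apply: sumr_ge0 => j _; apply: ltW; apply: w_pos.
Qed.

Lemma Pk_monic k : aPk k \is monic.
Proof. exact: monic_prod_XsubC. Qed.

Lemma size_Pk k (hk : (k < n)%N) : size (aPk k) = n.
Proof.
have e : aPP = ('X - (p k)%:P) * aPk k by rewrite /aPP (bigD1 (Ordinal hk)).
have : size aPP = n.+1.
  rewrite /aPP -(big_mkord xpredT (fun j : nat => 'X - (p j)%:P)).
  by rewrite size_prod_XsubC /index_iota subn0 size_iota.
rewrite e size_mul ?polyXsubC_eq0 ?monic_neq0 ?Pk_monic // size_XsubC.
by rewrite add2n /= => -[].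
Qed.

Lemma coef_Pk k (hk : (k < n)%N) : (aPk k)`_n.-1 = 1.
Proof.
by have /monicP := Pk_monic k; rewrite lead_coefE size_Pk.
Qed.

Lemma size_sum_Pk (c : nat -> R) : (size (\sum_(k < n) c k *: aPk k)%R <= n)%N.
Proof.
apply: (big_ind (fun q : {poly R} => (size q <= n)%N)) => //.
  by rewrite size_poly0.
  move=> x y hx hy; apply: leq_trans (size_polyD _ _) _; by rewrite geq_max hx hy.
move=> k _ /=; apply: leq_trans (size_scale_leq _ _) _.

by rewrite size_Pk.
Qed.

Lemma coef_sum_Pk (c : nat -> R) :
  (\sum_(k < n) c k *: aPk k)`_n.-1 = \sum_(k < n) c k.
Proof.
rewrite coef_sum; apply: eq_bigr => k _; by rewrite coefZ coef_Pk ?mulr1.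
Qed.

Lemma size_H : \sum_(k < n) w k * (2 / Rg + p k) != 0 ->
  size aH = n /\ lead_coef aH = \sum_(k < n) w k * (2 / Rg + p k).
Proof.
move=> hc.
have hs : size aH = n.
  have hle : (size aH <= n)%N by exact: (size_sum_Pk (fun k => w k * (2 / Rg + p k))).
  apply/eqP; rewrite eqn_leq hle /=.
  case: (ltnP (n.-1) (size aH)) => h.
    by move: h n2; case: (n).

  move: hc; rewrite -(coef_sum_Pk (fun k => w k * (2 / Rg + p k))) -/aH nth_default //.
  by rewrite eqxx.
by split => //; rewrite lead_coefE hs (coef_sum_Pk (fun k => w k * (2 / Rg + p k))).
Qed.

Lemma roots_bound (P : {poly R}) (s : seq R) : P != 0 -> (size P <= n)%N ->
  all (root P) s -> uniq s -> (size s < n)%N.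
Proof.
move=> P0 hs ha hu; apply: leq_trans (max_poly_roots P0 ha hu) hs.
Qed.

Lemma pole_root_Q k : (k < n)%N -> ~~ root aQ (p k).
Proof.
move=> hk; rewrite /root hornerQ_pole // mulf_neq0 ?Pk_self //.
by rewrite gt_eqF ?w_pos.
Qed.

Lemma Q_neq0 : aQ != 0.
Proof.
have h0 : (0 < n)%N by nlia.
apply: contraNN (@pole_root_Q 0 h0) => /eqP ->; by rewrite root0.
Qed.

Lemma Q_ivt k : (k.+1 < n)%N -> exists z, (p k < z < p k.+1) && root aQ z.
Proof.
move=> hk.
have hk0 : (k < n)%N by nlia.
set s := (-1) ^+ (n - k.+2) : R.
have e : (-1) ^+ (n - k.+1) = - s :> R.
  by rewrite /s -signS; congr (_ ^+ _); nlia.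
have h1 : 0 < - s * aQ.[p k].
  rewrite hornerQ_pole // mulrCA -e mulr_gt0 ?w_pos ?sgn_Pk //.
have h2 : 0 < s * aQ.[p k.+1].
  rewrite hornerQ_pole // mulrCA mulr_gt0 ?w_pos ?sgn_Pk //.
have := @neg_prod R _ _ _ (sign_sq _ _) h2 h1; rewrite mulrC => hneg.
have [z hz rz] := poly_ivtoo (ltW (p_inc _ _ (ltnSn k) hk)) hneg.
exists z; rewrite rz andbT; by move: hz; rewrite in_itv.
Qed.

Lemma exZ k : exists z, (k.+1 < n)%N ==> ((p k < z < p k.+1) && root aQ z).
Proof.
case: (ltnP k.+1 n) => h; last by exists 0.
have [z hz] := Q_ivt _ h; exists z; by rewrite hz.
Qed.

Definition az k : R := xchoose (exZ k).

Lemma azP k : (k.+1 < n)%N -> p k < az k < p k.+1 /\ root aQ (az k).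
Proof.
move=> h; have := xchooseP (exZ k); rewrite -/(az k) => /implyP /(_ h) /andP[-> ->]; done.
Qed.

Lemma az_inc i j : (i < j)%N -> (j.+1 < n)%N -> az i < az j.
Proof.
move=> ij jn; apply: (@incr_gen _ az n.-1 _ i j ij); last by nlia.
move=> k hk.
have hk1 : (k.+1 < n)%N by nlia.
have hk2 : (k.+2 < n)%N by nlia.
have [/andP[_ h1] _] := azP _ hk1.
have [/andP[h2 _] _] := azP _ hk2.
exact: lt_trans h1 h2.
Qed.

Lemma az_le i j : (i <= j)%N -> (j.+1 < n)%N -> az i <= az j.
Proof.
rewrite leq_eqVlt => /orP[/eqP -> //|ij jn].
by rewrite le_eqVlt az_inc ?orbT.
Qed.

Lemma sg_pos (s c x : R) : Num.sg x = Num.sg (s * c) -> s * s = 1 -> 0 < c -> 0 < s * x.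
Proof.
move=> h ss c0; rewrite -sgr_cp0 sgrM h sgrM mulrA -sgrM ss sgr1 mul1r.
by rewrite gtr0_sg.
Qed.

Lemma apoleP a : reflect (exists2 k, (k < n)%N & a = p k) (apole a).
Proof.
apply: (iffP existsP) => [[k /eqP e]|[k hk e]]; first by exists k.
by exists (Ordinal hk); rewrite e.
Qed.

Lemma root_nopole a : root aQ a -> ~~ apole a.
Proof.
move=> r; apply/apoleP => -[k hk e]; move: r; rewrite e.
by move/negP: (pole_root_Q _ hk).
Qed.

Lemma count_roots (P : {poly R}) (f : nat -> R) : P != 0 -> (size P <= n)%N ->
  (forall k, (k < n.-1)%N -> root P (f k)) ->
  (forall i j, (i < n.-1)%N -> (j < n.-1)%N -> f i = f j -> i = j) ->
  forall a, root P a -> exists2 k, (k < n.-1)%N & a = f k.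
Proof.
move=> P0 hs hr hi a ra.
case/boolP: [exists k : 'I_n.-1, a == f k] => [/existsP [k /eqP e] | /existsPn hno].
  by exists k.
exfalso.
have hu : uniq (a :: mkseq f n.-1).
  rewrite /= andbC map_inj_in_uniq ?iota_uniq //=.
    apply/negP => /mapP [k]; rewrite mem_iota add0n => /andP[_ hk] e.
    by move: (hno (Ordinal hk)); rewrite e eqxx.
  move=> i j; rewrite !mem_iota !add0n => /andP[_ hi'] /andP[_ hj'].
  exact: hi.
have ha : all (root P) (a :: mkseq f n.-1).
  rewrite /= ra /=; apply/allP => x /mapP [k]; rewrite mem_iota add0n.
  by move=> /andP[_ hk] ->; apply: hr.
have := roots_bound _ _ P0 hs ha hu.
rewrite /= size_mkseq; nlia.
Qed.

Lemma Q_roots a : root aQ a -> exists2 k, (k < n.-1)%N & a = az k.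
Proof.
apply: count_roots; first exact: Q_neq0.
- exact: (size_sum_Pk w).
- by move=> k hk; have [_ ->] := azP k ltac:(nlia).
- move=> i j hi hj e; case: (ltngtP i j) => // h.
    by move: (az_inc _ _ h ltac:(nlia)); rewrite e ltxx.
  by move: (az_inc _ _ h ltac:(nlia)); rewrite e ltxx.
Qed.

Lemma agg_az k : (k.+1 < n)%N -> agg (az k) = 0.
Proof.
move=> hk; have [_ r] := azP k hk.
have np := root_nopole _ r.
move: r; rewrite /root hornerQ // mulf_eq0 (negbTE (PP_neq0 _ np)) orbF.
by move/eqP.
Qed.

Lemma H_az k : (k.+1 < n)%N -> aH.[az k] = - AM * aPP.[az k].
Proof.
move=> hk; have [_ r] := azP k hk.
by rewrite hornerH ?root_nopole // agg_az // mulr0 sub0r.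
Qed.

Lemma sgn_PP_az k : (k.+1 < n)%N -> 0 < (-1) ^+ (n - k.+1) * aPP.[az k].
Proof. by move=> hk; have [h _] := azP k hk; apply: sgn_PP. Qed.

Lemma H_ivt k : (k.+2 < n)%N -> exists v, (az k < v < az k.+1) && root aH v.
Proof.
move=> hk.
have hk1 : (k.+1 < n)%N by nlia.
set s := (-1) ^+ (n - k.+2) : R.
have e : (-1) ^+ (n - k.+1) = - s :> R.
  by rewrite /s -signS; congr (_ ^+ _); nlia.
have h1 : 0 < s * aH.[az k].
  have -> : s * aH.[az k] = AM * (- s * aPP.[az k]) by rewrite H_az //; ring.
  by rewrite mulr_gt0 ?AM_pos // -e; apply: sgn_PP_az.
have h2 : 0 < - s * aH.[az k.+1].
  have -> : - s * aH.[az k.+1] = AM * (s * aPP.[az k.+1]) by rewrite H_az //; ring.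
  by rewrite mulr_gt0 ?AM_pos //; apply: sgn_PP_az.
have hneg := @neg_prod R _ _ _ (sign_sq _ _) h1 h2.
have [z hz rz] := poly_ivtoo (ltW (az_inc _ _ (ltnSn k) hk)) hneg.
exists z; rewrite rz andbT; by move: hz; rewrite in_itv.
Qed.

Lemma exV k : exists v, (k.+2 < n)%N ==> ((az k < v < az k.+1) && root aH v).
Proof.
case: (ltnP k.+2 n) => h; last by exists 0.
have [z hz] := H_ivt _ h; exists z; by rewrite hz.
Qed.

Definition av k : R := xchoose (exV k).

Lemma avP k : (k.+2 < n)%N -> az k < av k < az k.+1 /\ root aH (av k).
Proof.
move=> h; have := xchooseP (exV k); rewrite -/(av k) => /implyP /(_ h) /andP[-> ->]; done.
Qed.

Definition ASing a := ~ apole a /\ agg a = 0.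
Definition AFF a := if apole a then 1 + a * Rg / 2 else 1 + Rg / 2 * (a - AM / agg a).
Definition AZero a := ~ ASing a /\ AFF a = 0.
Definition AFinf := 1 + Rg / (2 * AM) * \sum_(k < n) w k * p k.

Lemma sing_iff a : ASing a <-> exists2 k, (k < n.-1)%N & a = az k.
Proof.
split.
  move=> [/negP np g0]; apply: Q_roots; by rewrite /root hornerQ // g0 mul0r.
move=> [k hk ->]; have [_ r] := azP k ltac:(nlia).
split; first by apply/negP; exact: root_nopole _ r.
by apply: agg_az; nlia.
Qed.

Lemma zero_iff a : AZero a <-> root aH a.
Proof.
have hR : Rg != 0 by rewrite gt_eqF.
rewrite /AZero /ASing /AFF.
case: (apoleP a) => [[k hk ->]|np].
  rewrite /root hornerH_pole // mulf_eq0 (negbTE (Pk_self _ hk)) orbF.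
  rewrite mulf_eq0 (gt_eqF (w_pos _ hk)) /=.
  have -> : 1 + p k * Rg / 2 = Rg / 2 * (2 / Rg + p k) by field; rewrite hR.
  have h2 : Rg / 2 != 0 by rewrite gt_eqF // divr_gt0 // ltr0n.
  split; first by move=> [_ /eqP]; rewrite mulf_eq0 (negbTE h2).
  move=> /eqP ->; split; last by rewrite mulr0.
  by move=> [].
have npb : ~~ apole a by apply/apoleP.
rewrite /root hornerH // mulf_eq0 (negbTE (PP_neq0 _ npb)) orbF.
case: (eqVneq (agg a) 0) => g0.
  rewrite g0 mulr0 sub0r oppr_eq0 gt_eqF ?AM_pos //.
  by split => // -[h _]; case: h; split.
have -> : 1 + Rg / 2 * (a - AM / agg a) =
   Rg / (2 * agg a) * ((2 / Rg + a) * agg a - AM) by field; rewrite g0 hR.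
have h3 : Rg / (2 * agg a) != 0 by rewrite mulf_neq0 // invr_neq0 // mulf_neq0 // pnatr_eq0.
split; first by move=> [_ /eqP]; rewrite mulf_eq0 (negbTE h3).
move=> /eqP ->; split; last by rewrite mulr0.
by move=> [_ h]; move: g0; rewrite h eqxx.
Qed.

Lemma L_eq : \sum_(k < n) w k * (2 / Rg + p k) = 2 * AM / Rg * AFinf.
Proof.
have hR : Rg != 0 by rewrite gt_eqF.
have hM : AM != 0 by rewrite gt_eqF ?AM_pos.
have -> : \sum_(k < n) w k * (2 / Rg + p k) = 2 / Rg * AM + \sum_(k < n) w k * p k.
  rewrite /AM mulr_sumr -big_split /=; apply: eq_bigr => k _; ring.
rewrite /AFinf; field; by rewrite hR hM.
Qed.

Lemma H_props : AFinf != 0 ->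
  aH != 0 /\ size aH = n /\ lead_coef aH = 2 * AM / Rg * AFinf.
Proof.
move=> hF.
have hR : Rg != 0 by rewrite gt_eqF.
have hM : AM != 0 by rewrite gt_eqF ?AM_pos.
have hL : \sum_(k < n) w k * (2 / Rg + p k) != 0.
  by rewrite L_eq !mulf_neq0 // ?invr_neq0 // pnatr_eq0.
have [hs hl] := size_H hL.
split; last by rewrite hs hl L_eq.
by rewrite -size_poly_gt0 hs; nlia.
Qed.

Lemma H_left : 0 < AFinf -> exists u, root aH u /\ u < az 0.
Proof.
move=> hF.
have [H0 [hs hl]] := H_props (lt0r_neq0 hF).
have hn0 : (0 < n)%N by nlia.
have hn1 : (0.+1 < n)%N by nlia.
set cb := cauchy_bound aH.
set y := Num.min (- cb) (az 0 - 1).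
have hy : y \in `]-oo, - cb] by rewrite in_itv /= ge_min lexx.
have hy2 : y < az 0.
  apply: (@le_lt_trans _ _ (az 0 - 1)); first by rewrite ge_min lexx orbT.
  by rewrite ltrBlDr ltrDl ltr01.
have sy := sgp_minftyP (le_cauchy_bound H0) hy.
have h1 : 0 < (-1) ^+ n.-1 * aH.[y].
  apply: (@sg_pos _ (2 * AM / Rg * AFinf)); [|exact: sign_sq|].
    by rewrite sy /sgp_minfty hs hl.
  by rewrite !mulr_gt0 ?AM_pos ?invr_gt0.
have h2 : 0 < - (-1) ^+ n.-1 * aH.[az 0].
  have -> : - (-1) ^+ n.-1 * aH.[az 0] = AM * ((-1) ^+ (n - 1) * aPP.[az 0]).
    by rewrite H_az // subn1; ring.
  by rewrite mulr_gt0 ?AM_pos // sgn_PP_az.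
have hneg := @neg_prod R _ _ _ (sign_sq _ _) h1 h2.
have [u hu ru] := poly_ivtoo (ltW hy2) hneg.
by exists u; split => //; move: hu; rewrite in_itv /= => /andP[].
Qed.

Lemma H_right : AFinf < 0 -> exists u, root aH u /\ az n.-2 < u.
Proof.
move=> hF.
have [H0 [hs hl]] := H_props (ltr0_neq0 hF).
have hn1 : (n.-2.+1 < n)%N by nlia.
set cb := cauchy_bound aH.
set y := Num.max cb (az n.-2 + 1).
have hy : y \in `[cb, +oo[ by rewrite in_itv /= le_max lexx andbT.
have hy2 : az n.-2 < y.
  apply: (@lt_le_trans _ _ (az n.-2 + 1)); last by rewrite le_max lexx orbT.
  by rewrite ltrDl ltr01.
have sy := sgp_pinftyP (ge_cauchy_bound H0) hy.
have h1 : 0 < - 1 * aH.[y].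
  apply: (@sg_pos _ (- (2 * AM / Rg * AFinf))).
  - by rewrite sy /sgp_pinfty hl mulN1r opprK.
  - by rewrite mulN1r opprK.
  by rewrite oppr_gt0 pmulr_rlt0 // !mulr_gt0 ?AM_pos ?invr_gt0.
have h2 : 0 < 1 * aH.[az n.-2].
  have -> : 1 * aH.[az n.-2] = AM * ((-1) ^+ (n - n.-2.+1) * aPP.[az n.-2]).
    have -> : (n - n.-2.+1)%N = 1%N by nlia.
    by rewrite H_az //; ring.
  by rewrite mulr_gt0 ?AM_pos // sgn_PP_az.
have hneg := @neg_prod R 1 _ _ (mulr1 1) h2 h1.
have [u hu ru] := poly_ivtoo (ltW hy2) hneg.
by exists u; split => //; move: hu; rewrite in_itv /= => /andP[].
Qed.

Lemma mem_mkseqP (f : nat -> R) m a :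
  reflect (exists2 k, (k < m)%N & a = f k) (a \in mkseq f m).
Proof.
apply: (iffP mapP) => [[k]|[k hk ->]]; last by exists k; rewrite // mem_iota.
by rewrite mem_iota add0n => /andP[_ hk] ->; exists k.
Qed.

Theorem abs_main (S Z : R -> Prop) (Fi : R) :
  (forall a, S a <-> ASing a) -> (forall a, Z a <-> AZero a) ->
  Fi = AFinf -> Fi != 0 ->
  exists (zs zF : seq R),
    sorted <%R zs /\ (forall a, S a <-> a \in zs) /\
    uniq zF /\ size zF = n.-1 /\ (forall a, Z a <-> a \in zF) /\
    size zs = n.-1 /\
    (forall k : nat, (k.+1 < size zs)%N ->
       exists! a, Z a /\ zs`_k < a < zs`_k.+1) /\
    (0 < Fi -> exists a, Z a /\ a < head 0 zs) /\
    (Fi < 0 -> exists a, Z a /\ last 0 zs < a).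
Proof.
move=> hS hZ -> hF0.
have [u [ru [hu1 hu2]]] : exists u, root aH u /\
   (0 < AFinf -> u < az 0) /\ (~~ (0 < AFinf) -> az n.-2 < u).
  case: (ltrP 0 AFinf) => hF.
    have [u [ru hu]] := H_left hF.
    by exists u; split => //; split.
  have hF' : AFinf < 0 by rewrite lt_neqAle hF0 hF.
  have [u [ru hu]] := H_right hF'.
  by exists u; split => //; split.
have hu : u < az 0 \/ az n.-2 < u.
  by case: (ltrP 0 AFinf) => hF; [left; apply: hu1 | right; apply: hu2; rewrite -leNgt].
pose fF k := if k is k'.+1 then av k' else u.
have hn1 : (0 < n.-1)%N by nlia.
have fF_root : forall k, (k < n.-1)%N -> root aH (fF k).
  by case=> [|k] hk //=; have [_ ->] := avP k ltac:(nlia).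
have fF_out : forall j, (j.+1 < n.-1)%N -> av j <> u.
  move=> j hj e; have [/andP[h1 h2] _] := avP j ltac:(nlia).
  case: hu => hu.
    have : az 0 <= az j by apply: az_le; nlia.
    by move: h1; rewrite e => h1 h; move: (lt_trans hu (le_lt_trans h h1)); rewrite ltxx.
  have : az j.+1 <= az n.-2 by apply: az_le; nlia.
  by move: h2; rewrite e => h2 h; move: (lt_trans hu (lt_le_trans h2 h)); rewrite ltxx.
have av_inc : forall i j, (i < j)%N -> (j.+2 < n)%N -> av i < av j.
  move=> i j ij jn; apply: (@incr_gen _ av n.-2 _ i j ij); last by nlia.
  move=> k hk.
  have [/andP[_ h1] _] := avP k ltac:(nlia).
  have [/andP[h2 _] _] := avP k.+1 ltac:(nlia).
  exact: lt_trans h1 h2.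
have fF_inj : forall i j, (i < n.-1)%N -> (j < n.-1)%N -> fF i = fF j -> i = j.
  case=> [|i] [|j] hi hj //= e.
  - by case: (fF_out j hj).
  - by case: (fF_out i hi).
  - case: (ltngtP i j) => [h|h|->] //.
      by move: (av_inc _ _ h ltac:(nlia)); rewrite e ltxx.
    by move: (av_inc _ _ h ltac:(nlia)); rewrite e ltxx.
have [H0 [hsH _]] := H_props hF0.
have Hroots := count_roots _ _ H0 (eq_leq hsH) fF_root fF_inj.
have zF_mem : forall a, Z a <-> a \in mkseq fF n.-1.
  move=> a; rewrite hZ zero_iff; split.
    by move=> /Hroots [k hk ->]; apply/mem_mkseqP; exists k.
  by move=> /mem_mkseqP [k hk ->]; apply: fF_root.
exists (mkseq az n.-1), (mkseq fF n.-1).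
split.
  apply/(sortedP 0) => i; rewrite size_mkseq => hi.
  by rewrite !nth_mkseq ?az_inc //; nlia.
split.
  move=> a; rewrite hS sing_iff; split.
    by move=> [k hk ->]; apply/mem_mkseqP; exists k.
  by move=> /mem_mkseqP.
split.
  rewrite map_inj_in_uniq ?iota_uniq // => i j.
  rewrite !mem_iota !add0n => /andP[_ hi] /andP[_ hj]; exact: fF_inj.
split; first by rewrite size_mkseq.
split; first exact: zF_mem.
split; first by rewrite size_mkseq.
split.
  move=> k; rewrite size_mkseq => hk.
  rewrite !nth_mkseq //; last by nlia.
  have [/andP[h1 h2] rv] := avP k ltac:(nlia).
  exists (av k); split.
    by split; [apply/zF_mem/mem_mkseqP; exists k.+1 | rewrite h1 h2].
  move=> b [/zF_mem /mem_mkseqP [j hj ->] /andP[b1 b2]].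
  case: j hj b1 b2 => [|j] hj /= b1 b2.
    exfalso; case: hu => hu.
      have : az 0 <= az k by apply: az_le; nlia.
      by move=> h; move: (lt_trans hu (le_lt_trans h b1)); rewrite ltxx.
    have : az k.+1 <= az n.-2 by apply: az_le; nlia.
    by move=> h; move: (lt_trans hu (lt_le_trans b2 h)); rewrite ltxx.
  have [/andP[c1 c2] _] := avP j ltac:(nlia).
  case: (ltngtP j k) => [h|h|-> //].
    have : az j.+1 <= az k by apply: az_le; nlia.
    by move=> h'; move: (lt_trans b1 (lt_le_trans c2 h')); rewrite ltxx.
  have : az k.+1 <= az j by apply: az_le; nlia.
  by move=> h'; move: (lt_trans b2 (le_lt_trans h' c1)); rewrite ltxx.
split.
  move=> hF; exists u; split; first by apply/zF_mem/mem_mkseqP; exists 0%N.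
  move: hn1; case: (n.-1) => [//|m] _ /=; exact: hu1.
move=> hF; exists u; split; first by apply/zF_mem/mem_mkseqP; exists 0%N.
rewrite -nth_last size_mkseq nth_mkseq; last by nlia.
by apply: hu2; rewrite -leNgt ltW.
Qed.

End Abs.

Theorem mainTheorem6 (R : realType) (N : nat) (xA xB : R)
    (dx xc : 'I_N -> R) (y : 'I_N -> nat) :
  (2 <= N)%N ->
  xA < xB ->
  (forall i, 0 < dx i) ->
  (* the bins tile [xA, xB] contiguously in increasing order *)
  (forall i : 'I_N, xc i - dx i / 2 = xA + \sum_(j < N | (j < i)%N) dx j) ->
  \sum_(j < N) dx j = xB - xA ->
  let d := fun i => xc i - xA in
  let Rg := xB - xA in
  (2 <= nOcc y)%N ->
  Finf d y Rg != 0 ->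
  exists (zs zF : seq R),
    (* zs = the singularities of F (zeros of g), listed increasingly *)
    sorted <%R zs /\ (forall a, is_sing d y a <-> a \in zs) /\
    (* F has exactly n-1 zeros, listed without repetition in zF *)
    uniq zF /\ size zF = (nOcc y).-1 /\ (forall a, is_zeroF d y Rg a <-> a \in zF) /\
    (* the open intervals between consecutive singularities are n-2 in number,
       and each contains exactly one zero of F *)
    size zs = (nOcc y).-1 /\
    (forall k : nat, (k.+1 < size zs)%N ->
       exists! a, is_zeroF d y Rg a /\ zs`_k < a < zs`_k.+1) /\
    (* the remaining zero *)
    (0 < Finf d y Rg -> exists a, is_zeroF d y Rg a /\ a < head 0 zs) /\
    (Finf d y Rg < 0 -> exists a, is_zeroF d y Rg a /\ last 0 zs < a).
Proof.
move=> N2 hAB hdx htile _ d Rg hn hF.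
have N0 : (0 < N)%N by nlia.
pose i0 := Ordinal N0.
pose occ := enum [pred i : 'I_N | (0 < y i)%N].
have hsz : size occ = nOcc y by rewrite /nOcc cardE.
have d_eq : forall i, d i = \sum_(j < N | (j < i)%N) dx j + dx i / 2.
  move=> i; rewrite /d; have := htile i => e.
  by rewrite -(subrK (dx i / 2) (xc i)) e; ring.
have d_pos : forall i, 0 < d i.
  move=> i; rewrite d_eq ltr_wpDl ?sumr_ge0 // => [j _|]; first exact: ltW.
  by rewrite divr_gt0 // ltr0n.
have d_inc : forall i j : 'I_N, (i < j)%N -> d i < d j.
  move=> i j ij; rewrite !d_eq.
  have h1 : \sum_(k < N | (k < i)%N) dx k + dx i <= \sum_(k < N | (k < j)%N) dx k.
    have -> : \sum_(k < N | (k < i)%N) dx k + dx i = \sum_(k < N | (k <= i)%N) dx k.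
      rewrite [RHS](bigD1 i) //= addrC; congr (_ + _).
      by apply: eq_bigl => k; rewrite ltn_neqAle andbC -val_eqE.
    rewrite big_mkcond [X in _ <= X]big_mkcond /=; apply: ler_sum => k _.
    case: ifP => h; last by case: ifP => // _; apply: ltW.
    by rewrite (leq_ltn_trans h ij).
  have := hdx i; have := hdx j; lra.
have occ_sorted : sorted ltn (map val occ).
  rewrite -[occ](eq_filter (mem_enum _)).
  rewrite -(eq_filter (mem_map val_inj _)) -filter_map.
  by rewrite (sorted_filter ltn_trans) // unlock val_ord_enum iota_ltn_sorted.
have occ_lt : forall a b, (a < b)%N -> (b < size occ)%N ->
    (nth i0 occ a < nth i0 occ b)%N.
  move=> a b ab bs.
  have := sorted_ltn_nth ltn_trans 0%N occ_sorted.
  rewrite size_map => /(_ a b); rewrite !inE => /(_ (ltn_trans ab bs) bs ab).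
  by rewrite !(nth_map i0) //; apply: ltn_trans ab bs.
have occ_pos : forall k, (k < size occ)%N -> (0 < y (nth i0 occ k))%N.
  by move=> k hk; have := mem_nth i0 hk; rewrite mem_enum.
have sum_tr : forall f : 'I_N -> R, (forall i, y i = 0%N -> f i = 0) ->
    \sum_(i < N) f i = \sum_(k < size occ) f (nth i0 occ k).
  move=> f hf; rewrite (bigID (fun i => (0 < y i)%N)) /=.
  rewrite [X in _ + X]big1 ?addr0; last first.
    by move=> i; rewrite -eqn0Ngt => /eqP /hf.
  transitivity (\sum_(i <- occ) f i); last by rewrite (big_nth i0) big_mkord.
  by rewrite /occ big_enum.
pose p k := - (d (nth i0 occ k))^-1.
pose w k := (y (nth i0 occ k))%:R : R.
have p_inc : forall a b, (a < b)%N -> (b < size occ)%N -> p a < p b.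
  move=> a b ab bs; rewrite /p ltrN2 ltf_pV2 ?posrE ?d_pos //.
  by apply: d_inc; apply: occ_lt.
have w_pos : forall k, (k < size occ)%N -> 0 < w k.
  by move=> k hk; rewrite /w ltr0n occ_pos.
have Rg_pos : 0 < Rg by rewrite subr_gt0.
have term : forall a i, (y i)%:R * d i / (1 + a * d i) = (y i)%:R / (a - - (d i)^-1).
  move=> a i; have := d_pos i => h; rewrite opprK -mulrA; congr (_ * _).
  have -> : a + (d i)^-1 = (1 + a * d i) / d i by field; rewrite gt_eqF.
  by rewrite invf_div.
have hg : forall a, gfun d y a = agg _ (size occ) p w a.
  move=> a; rewrite /gfun sum_tr; last by move=> i ->; rewrite !mul0r.
  by apply: eq_bigr => k _; rewrite term.
have hpole : forall a, is_pole d y a = apole _ (size occ) p a.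
  move=> a; apply/existsP/apoleP.
    move=> [i /andP [yi /eqP e]].
    have : i \in occ by rewrite mem_enum.
    move=> /(nthP i0) [k hk ek]; exists k => //.
    rewrite /p ek; have := d_pos i => h.
    apply: (@mulIf _ (d i)); first by rewrite gt_eqF.
    rewrite mulNr mulVf ?gt_eqF //; apply/eqP; rewrite -addr_eq0 addrC; exact/eqP.
  move=> [k hk ->]; exists (nth i0 occ k); rewrite occ_pos //=.
  by rewrite /p mulNr mulVf ?(lt0r_neq0 (d_pos _)) // subrr.
have hM : Mtot R y = AM _ (size occ) w.
  by rewrite /Mtot natr_sum sum_tr // => i ->.
have hFi : Finf d y Rg = AFinf _ (size occ) p w Rg.
  rewrite /Finf /AFinf hM.
  have -> : \sum_(k < size occ) w k * p k = - \sum_(i < N) (y i)%:R / d i.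
    rewrite (sum_tr (fun i => (y i)%:R / d i)); last by move=> i ->; rewrite mul0r.
    by rewrite -sumrN; apply: eq_bigr => k _; rewrite /w /p mulrN.
  by rewrite mulrN.
rewrite -hsz.
apply: (@abs_main R (size occ) p w Rg).
- by rewrite hsz.
- exact: p_inc.
- exact: w_pos.
- exact: Rg_pos.
- by move=> a; rewrite /is_sing /ASing hg hpole.
- by move=> a; rewrite /is_zeroF /AZero /is_sing /ASing /Ffun /AFF hg hpole hM.
- exact: hFi.
exact: hF.
Qed.
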